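(* Let $q$ and $n$ be positive integers with $q>\lceil n/2\rceil$, and let $a_1,\dots,a_n\in\mathbb{Z}_q$ be reduced residues (i.e. $\gcd(a_i,q)=1$ for all $i$). Then the number of the $2^n$ choices $(\varepsilon_1,\dots,\varepsilon_n)\in\{0,1\}^n$ for which $\sum_{i=1}^n\varepsilon_i a_i\equiv 0\pmod q$ is at most $\binom{n}{\lfloor n/2\rfloor}$. Moreover, this bound is best possible: for all such $q,n$ there exist reduced residues $a_1,\dots,a_n$ attaining it.
   Context: $\mathbb{Z}_q$ denotes the integers modulo $q$. *)

(* Defs.v *)
From mathcomp Require Import all_boot.
Set Implicit Arguments. Unset Strict Implicit. Unset Printing Implicit Defensive.

(* Elements of Z_q are represented by their canonical representatives in 'I_q.
   A choice (eps_1,...,eps_n) in {0,1}^n is a boolean finite function on 'I_n. *)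
Definition zero_sum_count (q n : nat) (a : 'I_n -> 'I_q) : nat :=
  #|[set e : {ffun 'I_n -> bool} | (\sum_(i < n) e i * a i) %% q == 0]|.

(* Main.v *)
Require Import Defs.
From mathcomp Require Import all_boot all_algebra.
From mathcomp Require Import zify.
Import GRing.Theory.
Set Implicit Arguments. Unset Strict Implicit. Unset Printing Implicit Defensive.
Local Open Scope ring_scope.

Definition Nc p n (a : 'I_n -> 'I_p.+2) (J : {set 'I_n}) (t : 'I_p.+2) : nat :=
  #|[set E : {set 'I_n} | (E \subset J) && (\sum_(i in E) a i == t)]|.

Lemma Nc_add p n (a : 'I_n -> 'I_p.+2) (J : {set 'I_n}) k t : k \notin J ->
  Nc a (k |: J) t = addn (Nc a J t) (Nc a J (t - a k)).
Proof.
move=> kJ; rewrite /Nc.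
set A := [set E : {set 'I_n} | (E \subset J) && (\sum_(i in E) a i == t)].
set B := [set E : {set 'I_n} | (E \subset J) && (\sum_(i in E) a i == t - a k)].
have -> : [set E : {set 'I_n} | (E \subset k |: J) && (\sum_(i in E) a i == t)] =
   A :|: [set k |: E | E in B].

  apply/setP=> E; rewrite !inE; apply/idP/idP.
  - case/andP=> sE /eqP sum; case kE: (k \in E).
    + apply/orP; right; apply/imsetP; exists (E :\ k); last by rewrite setD1K.
      rewrite inE; apply/andP; split.
        apply/subsetP=> x; rewrite !inE => /andP[xk xE].
        by move/subsetP: sE => /(_ x xE); rewrite !inE (negbTE xk).
      by rewrite -sum (big_setD1 k kE) /= addrC addrK.
    + apply/orP; left; rewrite sum eqxx andbT.
      apply/subsetP=> x xE; move/subsetP: sE => /(_ x xE); rewrite !inE.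
      by case/orP=> // /eqP xk; rewrite -xk xE in kE.
  - case/orP.
    + move=> /andP[sE ->]; rewrite andbT.
      by apply: (subset_trans sE); apply/subsetP=> x; rewrite !inE orbC => ->.
    + case/imsetP=> F; rewrite inE => /andP[sF /eqP sum] ->.
      have kF : k \notin F by apply: contra kJ; move/subsetP: sF; apply.
      rewrite (big_setU1 _ kF) /= sum addrC subrK eqxx andbT.
      by rewrite setUS.
rewrite cardsU.
have -> : A :&: [set k |: E | E in B] = set0.
  apply/setP=> E; rewrite !inE; apply/andP=> -[] /andP[sE _].
  case/imsetP=> F _ EF; move/subsetP: sE => /(_ k); rewrite EF !inE eqxx /=.
  by move=> /(_ isT); apply/negP.
rewrite cards0 subn0 card_in_imset //.
move=> E F; rewrite !inE => /andP[sE _] /andP[sF _] EF.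
have kE : k \notin E by apply: contra kJ; move/subsetP: sE; apply.
have kF : k \notin F by apply: contra kJ; move/subsetP: sF; apply.
by rewrite -(setU1K kE) EF setU1K.
Qed.

Definition shift p (X : {set 'I_p.+2}) (b : 'I_p.+2) := [set y + b | y in X].

Lemma in_shift p (X : {set 'I_p.+2}) b t : (t \in shift X b) = (t - b \in X).
Proof.
apply/imsetP/idP => [[y yX ->]|tX]; first by rewrite addrK.
by exists (t - b); rewrite // subrK.
Qed.

Lemma card_shift p (X : {set 'I_p.+2}) b : #|shift X b| = #|X|.
Proof. by apply: card_imset; apply: addIr. Qed.

Lemma closed_full p (X : {set 'I_p.+2}) b : b \is a GRing.unit ->
  (forall x, x \in X -> x + b \in X) -> X != set0 -> X = setT.
Proof.
move=> ub cl /set0Pn[y yX]; apply/setP=> z; rewrite inE.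
have -> : z = y + b *+ (val ((z - y) / b)).
  by rewrite -mulr_natl natr_Zp mulrVK // addrC subrK.
elim: (val _) => [|m IH]; first by rewrite mulr0n addr0.
by rewrite mulrS addrCA addrC cl.
Qed.

Definition splitc p (b : 'I_p.+2) (X : {set 'I_p.+2}) :=
  if [pick x in X | x + b \notin X] is Some x then (x + b |: X, shift (X :\ x) b)
  else (X, shift X b).

Definition hstep1 (h : nat) : seq nat := h.+1 :: (if (h <= 1)%N then [::] else [:: h.-1]).

Definition stepc p (b : 'I_p.+2) (c : nat * {set 'I_p.+2}) :=
  (c.1.+1, (splitc b c.2).1) :: (if (c.1 <= 1)%N then [::] else [:: (c.1.-1, (splitc b c.2).2)]).

Lemma splitc_ind p (b : 'I_p.+2) (X : {set 'I_p.+2}) t :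
  addn (nat_of_bool (t \in (splitc b X).1)) (nat_of_bool (t \in (splitc b X).2)) = addn (nat_of_bool (t \in X)) (nat_of_bool (t - b \in X)).
Proof.
rewrite /splitc; case: pickP => [x /andP[xX xbX]|_]; last by rewrite in_shift.
rewrite in_shift !inE.
case: (eqVneq t (x + b)) => [->|ne]; first by rewrite addrK eqxx xX (negbTE xbX).
have : t - b != x by apply: contra ne => /eqP <-; rewrite subrK.
by move/negbTE => ->.
Qed.

Lemma splitc_cases p (b : 'I_p.+2) (X : {set 'I_p.+2}) : b \is a GRing.unit ->
  (exists x, x \in X /\ splitc b X = (x + b |: X, shift (X :\ x) b)) \/
  ((X = set0 \/ X = setT) /\ splitc b X = (X, shift X b)).
Proof.
move=> ub; rewrite /splitc; case: pickP => [x /andP[xX _]|none]; first by left; exists x.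
right; split=> //; case: (eqVneq X set0) => [->|ne]; first by left.
right; apply: closed_full ub _ ne => x xX.
by move: (none x); rewrite xX /= => /negbFE.
Qed.

Definition inv p n j (c : nat * {set 'I_p.+2}) :=
  [&& (0 < c.1)%N, (c.1 <= j.+1)%N & (#|c.2| <= c.1)%N || (n - j < c.1)%N].

Lemma stepc_ok p n j (b : 'I_p.+2) c : b \is a GRing.unit -> (j < n)%N ->
  (n <= p.*2.+2)%N -> inv n j c ->
 [/\ forall t, (\sum_(c' <- stepc b c) nat_of_bool (t \in c'.2))%N =
         addn (t \in c.2) (t - b \in c.2),
     map fst (stepc b c) = hstep1 c.1 & all (inv n j.+1) (stepc b c)].
Proof.
case: c => h X ub ljn hn /and3P[/= h0 hj hX].
have cT : #|[set: 'I_p.+2]| = p.+2 by rewrite cardsT card_ord.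
split.
- move=> t; rewrite -splitc_ind /stepc /=; case: ifP => h1.
  + rewrite big_cons big_nil /= addn0.
    have : #|(splitc b X).2| == 0%N.
      have [[x [xX ->]] | [[XX|XX] ->]] := @splitc_cases p b X ub => /=.
      * rewrite card_shift; move: (cardsD1 x X); rewrite xX /= => cD.
        move: hX; case/orP => hX; lia.
      * by rewrite card_shift XX cards0.
      * by move: hX; rewrite XX cT; case/orP => hX; lia.
    by rewrite cards_eq0 => /eqP ->; rewrite inE addn0.
  + by rewrite !big_cons big_nil /= addn0.
- by rewrite /stepc /hstep1 /=; case: ifP.
- have cY : (#|(splitc b X).1| <= #|X|.+1)%N.
    have [[x [xX ->]] | [_ ->]] := @splitc_cases p b X ub => //=.
    by rewrite cardsU1; case: (_ \notin _).
  have cZ : (#|(splitc b X).2| <= #|X|.-1)%N \/ (#|(splitc b X).2| = p.+2 /\ #|X| = p.+2).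
    have [[x [xX ->]] | [[XX|XX] ->]] := @splitc_cases p b X ub => /=.
    * left; rewrite card_shift; move: (cardsD1 x X); rewrite xX /= => cD; lia.
    * by left; rewrite card_shift XX cards0.
    * by right; rewrite card_shift XX cT.
  rewrite /stepc /=; case: ifP => h1 /=; rewrite /inv /= ?andbT;
  move: cY cZ hX; set y := #|(splitc b X).1|; set z := #|(splitc b X).2|; set x := #|X| => cY cZ hX.
    apply/andP; split; first lia.
    by case/orP: hX => hX; apply/orP; [left|right]; lia.
  apply/andP; split.
    apply/andP; split; first lia.
    by case/orP: hX => hX; apply/orP; [left|right]; lia.
  apply/and3P; split; try lia.
Qed.

Arguments stepc : simpl never.
Arguments hstep1 : simpl never.

Fixpoint Hs (j : nat) : seq nat :=
  if j is j'.+1 then flatten (map hstep1 (Hs j')) else [:: 1%N].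

Lemma main_inv p n (a : 'I_n -> 'I_p.+2) : (forall i, a i \is a GRing.unit) ->
  (n <= p.*2.+2)%N ->
  forall j (J : {set 'I_n}), #|J| = j -> exists L : seq (nat * {set 'I_p.+2}),
   [/\ forall t, Nc a J t = (\sum_(c <- L) nat_of_bool (t \in c.2))%N,
       map fst L = Hs j & all (inv n j) L].
Proof.
move=> ua hn; elim=> [|j IH] J cJ.
  exists [:: (1%N, [set 0])]; split => //; last by rewrite /inv /= cards1.
  move=> t; rewrite big_cons big_nil addn0 /= inE.
  move/eqP: cJ; rewrite cards_eq0 => /eqP ->; rewrite /Nc.
  have -> : [set E : {set 'I_n} | (E \subset set0) && (\sum_(i in E) a i == t)] =
     if t == 0 then [set set0] else set0.
    apply/setP => E; rewrite !inE subset0; case: (eqVneq E set0) => [->|ne] /=.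
      rewrite big_set0 eq_sym; case: (t == 0); rewrite ?inE ?eqxx //.
    by case: (t == 0); rewrite ?inE ?(negbTE ne).
  by case: (t == 0); rewrite ?cards1 ?cards0.
have [k kJ] : exists k, k \in J.
  by apply/set0Pn; rewrite -cards_eq0 cJ.
have cJ' : #|J :\ k| = j by move: (cardsD1 k J); rewrite kJ cJ add1n => -[].
have jn : (j < n)%N by move: (max_card J); rewrite card_ord cJ.
have [L [HN HH HI]] := IH _ cJ'.
have kJ' : k \notin J :\ k by rewrite !inE eqxx.
exists (flatten (map (stepc (a k)) L)); split.
- move=> t; rewrite -(setD1K kJ) Nc_add // !HN big_flatten big_map /= -big_split /=.
  apply: eq_big_seq => c cL.
  by have [s1 _ _] := stepc_ok (ua k) jn hn (allP HI c cL); rewrite s1.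
- rewrite /= -HH map_flatten -!map_comp; congr flatten; apply/eq_in_map => c cL /=.
  by have [_ s2 _] := stepc_ok (ua k) jn hn (allP HI c cL).
- apply/allP => c' /flattenP [s /mapP [c cL ->] c's].
  have [_ _ s3] := stepc_ok (ua k) jn hn (allP HI c cL).
  exact: (allP s3).
Qed.

Lemma Hs_bound j : all (fun x => (0 < x <= j.+1)%N) (Hs j).
Proof.
elim: j => [|j IH] //=; apply/allP => x /flattenP [s /mapP [h hH ->]].
move: (allP IH h hH) => /andP[h0 hj].
rewrite /hstep1; case: ifP => h1; rewrite !inE; [move/eqP -> | case/orP => /eqP ->]; lia.
Qed.

Definition G j m := count (fun x => (m < x)%N) (Hs j).

Lemma G_zero j m : (j < m)%N -> G j m = 0%N.
Proof.
move=> jm; rewrite /G -(count_pred0 (Hs j)); apply: eq_in_count => x xH.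
move: (allP (Hs_bound j) x xH) => /andP[_ xj] /=; apply/negbTE; rewrite -leqNgt; lia.
Qed.

Lemma count_step (P : pred nat) s : count P (flatten (map hstep1 s)) =
  (count (fun x => P x.+1) s + count (fun x => (1 < x)%N && P x.-1) s)%N.
Proof.
elim: s => [|h s IH] //=; rewrite count_cat IH /hstep1.
case: ifP => h1 /=; rewrite ?addn0; last by rewrite ltnNge h1 /=; lia.
by rewrite ltnNge h1 /=; lia.
Qed.

Lemma G_step j m : G j.+1 m = (count (fun x => (m <= x)%N) (Hs j) + G j m.+1)%N.
Proof.
rewrite /G /= count_step; congr addn; apply: eq_in_count => x _ /=.
by case: x => [|[|x]] //=; lia.
Qed.

Lemma G_formula j m r b : (b <= 1)%N -> (m + 2 * r + b)%N = j -> G j m = 'C(j, r).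
Proof.
elim: j m r b => [|j IH] m r b hb e.
  have [-> ->] : m = 0%N /\ r = 0%N by lia.
  by rewrite /G /= bin0.
rewrite G_step.
case: m e => [|m] e.
  have -> : count (fun x => (0 <= x)%N) (Hs j) = G j 0.
    apply: eq_in_count => x xH /=; move: (allP (Hs_bound j) x xH) => /andP[x0 _]; lia.
  case: b hb e => [|[|//]] _ e.
    case: r e => [|r] e; first lia.
    rewrite (IH 0%N r 1%N isT ltac:(lia)) (IH 1%N r 0%N isT ltac:(lia)).
    rewrite binS; congr addn.
    have -> : r.+1 = (j - r)%N by lia.
    by rewrite bin_sub //; lia.
  case: r e => [|r] e.
    have j0 : j = 0%N by lia.
    by subst j; rewrite (IH 0%N 0%N 0%N) // G_zero.
  rewrite (IH 0%N r.+1 0%N isT ltac:(lia)) (IH 1%N r 1%N isT ltac:(lia)).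
  by rewrite binS.
have -> : count (fun x => (m.+1 <= x)%N) (Hs j) = G j m by [].
case: r e => [|r] e.
  by rewrite (IH m 0%N b hb ltac:(lia)) G_zero ?bin0 //; lia.
rewrite (IH m r.+1 b hb ltac:(lia)) (IH m.+2 r b hb ltac:(lia)).
by rewrite binS.
Qed.

Lemma size_Hs n : size (Hs n) = 'C(n, n./2).
Proof.
have -> : size (Hs n) = G n 0.
  rewrite /G -(count_predT (Hs n)); apply: eq_in_count => x xH /=.
  by move: (allP (Hs_bound n) x xH) => /andP[-> _].
apply: (G_formula (b := odd n)); first by case: (odd n).
move: (odd_double_half n); rewrite -muln2; lia.
Qed.

Lemma zsc_Nc p n (a : 'I_n -> 'I_p.+2) : zero_sum_count a = Nc a setT 0.
Proof.
rewrite /zero_sum_count /Nc.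
set f := fun e : {ffun 'I_n -> bool} => [set i | e i].
have finj : injective f.
  move=> e1 e2 /setP E; apply/ffunP => i; move: (E i); rewrite !inE.
  by move=> ->.
rewrite -(card_imset _ finj); apply: eq_card => E; rewrite [in RHS]inE subsetT /=.
have key : forall E : {set 'I_n}, (\sum_(i in E) a i == 0) =
    ((\sum_(i in E) (a i : nat))%N %% p.+2 == 0)%N.
  move=> F; rewrite -val_Zp_nat // natr_sum.
  have -> : (\sum_(i in F) ((a i : nat))%:R : 'I_p.+2) = \sum_(i in F) a i.
    by apply: eq_bigr => i _; rewrite natr_Zp.
  by rewrite -val_eqE.
apply/imsetP/idP => [[e]|].
  rewrite inE => He ->; rewrite key; move: He.
  suff -> : (\sum_(i < n) e i * a i)%N = (\sum_(i in f e) (a i : nat))%N by [].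
  rewrite [RHS]big_mkcond /=; apply: eq_bigr => i _; rewrite inE.
  by case: (e i); rewrite ?mul1n ?mul0n.
rewrite key => HE; exists [ffun i => i \in E].
  rewrite inE; move: HE.
  suff -> : (\sum_(i < n) [ffun i => i \in E] i * a i)%N = (\sum_(i in E) (a i : nat))%N by [].
  rewrite [RHS]big_mkcond /=; apply: eq_bigr => i _; rewrite ffunE.
  by case: (i \in E); rewrite ?mul1n ?mul0n.
by apply/setP => i; rewrite inE ffunE.
Qed.

Lemma upper p n (a : 'I_n -> 'I_p.+2) : (n <= p.*2.+2)%N ->
  (forall i, coprime (a i) p.+2) -> (zero_sum_count a <= 'C(n, n./2))%N.
Proof.
move=> hn co.
have ua : forall i, a i \is a GRing.unit.
  move=> i; have := @unitZpE p.+2 (a i) isT; rewrite coprime_sym co.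
  by rewrite natr_Zp.
have [L [HN HH _]] := main_inv ua hn (J := setT) (erefl _).
rewrite zsc_Nc HN; move: HH; rewrite cardsT card_ord => HH.
rewrite -size_Hs -HH size_map -sum1_size.
by apply: leq_sum => c _; case: (_ \in _).
Qed.

Definition a0 p n : 'I_n -> 'I_p.+2 := fun i => if (i < n./2)%N then 1 else -1.

Lemma lower p n : ('C(n, n./2) <= zero_sum_count (@a0 p n))%N.
Proof.
rewrite zsc_Nc /Nc.
set L := [set i : 'I_n | (i < n./2)%N].
have cL : #|L| = n./2.
  have le : (n./2 <= n)%N by rewrite -{2}(odd_double_half n) -addnn; lia.
  have -> : L = [set widen_ord le i | i : 'I_n./2].
    apply/setP => i; rewrite inE; apply/idP/imsetP => [lt|[j _ ->]] /=.
      by exists (Ordinal lt) => //; apply: val_inj.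
    exact: ltn_ord.
  rewrite card_imset ?card_ord // => x y /(congr1 val) /= xy; exact: val_inj.
set g := fun T : {set 'I_n} => (T :\: L) :|: (L :\: T).
have gK : involutive g.
  move=> T; apply/setP => i; rewrite /g !inE.
  by case: (i \in T); case: (i < n./2)%N.
rewrite -cL -{1}(card_ord n) -card_draws.
rewrite -[#|[set A | _]|](card_imset _ (inv_inj gK)).
apply: subset_leq_card; apply/subsetP => E /imsetP [T TD ->]; have cT : #|T| = #|L| by move: TD; rewrite inE => /eqP.
rewrite inE subsetT /= (big_setID L) /=.
have -> : \sum_(i in g T :&: L) a0 p i = \sum_(i in g T :&: L) (1 : 'I_p.+2).
  by apply: eq_bigr => i; rewrite !inE /a0 => /andP[_ ->].
have -> : \sum_(i in g T :\: L) a0 p i = \sum_(i in g T :\: L) (-1 : 'I_p.+2).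
  by apply: eq_bigr => i; rewrite !inE /a0 => /andP[/negbTE -> _].
rewrite !sumr_const.
have -> : #|g T :&: L| = #|g T :\: L|.
  have -> : g T :&: L = L :\: T.
    by apply/setP => i; rewrite /g !inE; case: (i \in T); case: (i < n./2)%N.
  have -> : g T :\: L = T :\: L.
    by apply/setP => i; rewrite /g !inE; case: (i \in T); case: (i < n./2)%N.
  by rewrite !cardsD setIC cT cL.
by rewrite mulNrn addrN.
Qed.

Lemma cop_m1 p : coprime (val (-1 : 'I_p.+2)) p.+2.
Proof.
have -> : val (-1 : 'I_p.+2) = p.+1.
  rewrite /= (@modn_small 1) // subn1 /= modn_small //.
exact: (coprimePn (n := p.+2)).
Qed.

Local Close Scope ring_scope.
Unset Implicit Arguments.

Theorem corollary1 (q n : nat) (hq : 0 < q) (hn : 0 < n) (hqn : uphalf n < q) :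
  (forall a : 'I_n -> 'I_q, (forall i, coprime (a i) q) ->
     zero_sum_count a <= 'C(n, n./2))
  /\ (exists a : 'I_n -> 'I_q, (forall i, coprime (a i) q) /\
        zero_sum_count a = 'C(n, n./2)).
Proof.
case: q hq hqn => [|[|p]] // _ hqn.
  by case: n hn hqn.
have hn2 : n <= p.*2.+2.
  move: (odd_double_half n.+1); rewrite -uphalfE -!muln2.
  case: (odd n.+1) => /=; lia.
split; first by move=> a; apply: upper.
exists (@a0 p n); split.
  move=> i; rewrite /a0; case: ifP => _ /=; first exact: coprime1n.
  exact: cop_m1.
apply/eqP; rewrite eqn_leq lower andbT; apply: upper => // i.
rewrite /a0; case: ifP => _ /=; first exact: coprime1n.
exact: cop_m1.
Qed.
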